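(* Suppose that the topology $\sigma(L_{\mathcal F},L_{\mathcal F}^{*})$ has the C-property and that $L_{\mathcal F}$ is order complete. Let $\pi:L_{\mathcal F}\to L_{\mathcal G}$ satisfy (MON) and (QCO). Then $\pi$ is $\sigma(L_{\mathcal F},L_{\mathcal F}^{*})$-lower semicontinuous (i.e. $\{X\in L_{\mathcal F}:\pi(X)\le Y\}$ is $\sigma(L_{\mathcal F},L^*_{\mathcal F})$-closed for every $Y\in L_{\mathcal G}$) if and only if $\pi$ is continuous from below, i.e. $X_n\uparrow X$ $\mathbb P$-a.s. implies $\pi(X_n)\uparrow\pi(X)$ $\mathbb P$-a.s.
   Context: Let $(\Omega,\mathcal F,\mathbb P)$ be a probability space, $\mathcal G\subseteq\mathcal F$ a sub-$\sigma$-algebra; (in)equalities between random variables hold $\mathbb P$-a.s. Standing assumptions: $L_{\mathcal F}\subseteq L^0(\Omega,\mathcal F,\mathbb P)$ and $L_{\mathcal G}\subseteq L^0(\Omega,\mathcal G,\mathbb P)$ are vector lattices closed under multiplication by indicators of $\mathcal F$- (resp. $\mathcal G$-) measurable sets; the order continuous dual $L^*_{\mathcal F}$ of $(L_{\mathcal F},\ge)$ is a lattice contained in $L^1(\Omega,\mathcal F,\mathbb P)$ (functionals $X\mapsto E_{\mathbb P}[ZX]$), closed under multiplication by indicators of $\mathcal F$-measurable sets; $(L_{\mathcal F},\sigma(L_{\mathcal F},L^*_{\mathcal F}))$ is a locally convex Riesz space. (MON): $X\le Y\Rightarrow\pi(X)\le\pi(Y)$; (QCO): $\pi(\Lambda X+(1-\Lambda)Y)\le\pi(X)\vee\pi(Y)$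 for $X,Y\in L_{\mathcal F}$ and $\mathcal G$-measurable $\Lambda$ with $0\le\Lambda\le 1$. A sequence $X_n$ order converges to $X$ ($X_n\overset{o}{\to}X$) if there are $Y_n\in L_{\mathcal F}$ with $Y_n\downarrow0$ and $|X-X_n|\le Y_n$. A linear topology $\tau$ on a Riesz space has the C-property if whenever a net $X_\alpha\overset{\tau}{\to}X$ there exist a sequence $X_{\alpha_n}$ of elements of the net and convex combinations $Z_n\in\mathrm{conv}(X_{\alpha_n},X_{\alpha_{n+1}},\dots)$ with $Z_n\overset{o}{\to}X$. *)

(* Defs.v *)
From HB Require Import structures.
From mathcomp Require Import all_boot all_order all_algebra.
From mathcomp Require Import all_classical all_reals all_analysis.
Set Implicit Arguments. Unset Strict Implicit. Unset Printing Implicit Defensive.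
Import Order.TTheory GRing.Theory Num.Theory.
Import numFieldNormedType.Exports.
Local Open Scope classical_set_scope.
Local Open Scope ring_scope.

(* Random variables are represented by functions Omega -> R; all
   (in)equalities between them are understood P-almost surely. *)

Section Defs.
Context (d : measure_display) (Omega : measurableType d) (R : realType)
        (P : probability Omega R).

Definition rv := Omega -> R.

Definition ale (X Y : rv) : Prop := {ae P, forall w, X w <= Y w}.

Definition pair_E (Z X : rv) : R := Rintegral P setT (fun w => Z w * X w).

Definition Gmeas (G : set (set Omega)) (X : rv) : Prop :=
  forall B : set R, measurable B -> G (X @^-1` B).

Definition vlattice_ind (M : set (set Omega)) (L : set rv) : Prop :=
  [/\ L (fun _ => 0),
      (forall X Y, L X -> L Y -> L (fun w => X w + Y w)),
      (forall (a : R) X, L X -> L (fun w => a * X w)),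
      (forall X Y, L X -> L Y -> L (fun w => Num.max (X w) (Y w))) &
      (forall A X, M A -> L X -> L (fun w => \1_A w * X w))].

Definition decr_to0 (Y : nat -> rv) : Prop :=
  {ae P, forall w, (forall n, Y n.+1 w <= Y n w) /\ (fun n => Y n w) @ \oo --> (0:R)}.

Definition incr_to (Xn : nat -> rv) (X : rv) : Prop :=
  {ae P, forall w, (forall n, Xn n w <= Xn n.+1 w) /\ (fun n => Xn n w) @ \oo --> X w}.

Definition oconv (L : set rv) (Xn : nat -> rv) (X : rv) : Prop :=
  exists Y : nat -> rv, (forall n, L (Y n)) /\ decr_to0 Y /\
    forall n, ale (fun w => `|X w - Xn n w|) (Y n).

Definition ocomplete (L : set rv) : Prop :=
  forall A : set rv, A `<=` L -> A !=set0 ->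
    (exists U, L U /\ forall X, A X -> ale X U) ->
    exists S, [/\ L S, (forall X, A X -> ale X S) &
                   (forall U, L U -> (forall X, A X -> ale X U) -> ale S U)].

Definition oc_functional (L : set rv) (phi : rv -> R) : Prop :=
  [/\ (forall (a b : R) X Y, L X -> L Y ->
          phi (fun w => a * X w + b * Y w) = a * phi X + b * phi Y),
      (forall X Y, L X -> L Y -> exists c : R, forall W, L W ->
          ale X W -> ale W Y -> `|phi W| <= c) &
      (forall (Xn : nat -> rv) X, (forall n, L (Xn n)) -> L X ->
          oconv L Xn X -> (fun n => phi (Xn n)) @ \oo --> phi X)].

Definition wconv_net (Lstar : set rv) (I : Type) (le : I -> I -> Prop)
    (x : I -> rv) (X : rv) : Prop :=
  forall Z, Lstar Z -> forall e : R, 0 < e ->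
    exists a0, forall a, le a0 a -> `|pair_E Z (x a) - pair_E Z X| < e.

Definition directed (I : Type) (le : I -> I -> Prop) : Prop :=
  [/\ inhabited I, (forall a, le a a), (forall a b c, le a b -> le b c -> le a c) &
      (forall a b, exists c, le a c /\ le b c)].

Definition in_conv_tail (f : nat -> rv) (n : nat) (W : rv) : Prop :=
  exists (m : nat) (c : nat -> R), [/\ (forall k, 0 <= c k),
    \sum_(n <= k < m) c k = 1 &
    W = (fun w => \sum_(n <= k < m) c k * f k w)].

Definition C_property (L Lstar : set rv) : Prop :=
  forall (I : Type) (le : I -> I -> Prop) (x : I -> rv) (X : rv),
    directed le -> (forall a, L (x a)) -> L X -> wconv_net Lstar le x X ->
    exists (al : nat -> I) (Zn : nat -> rv),
      (forall n, L (Zn n)) /\ (forall n, in_conv_tail (fun k => x (al k)) n (Zn n)) /\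
      oconv L Zn X.

(* A subset A of L is closed in sigma(L, Lstar): its complement in L is open,
   basic neighbourhoods given by finitely many Z_i in Lstar and e > 0 *)
Definition wclosed (L Lstar : set rv) (A : set rv) : Prop :=
  forall X, L X -> ~ A X ->
    exists (n : nat) (Zs : 'I_n -> rv) (e : R),
      [/\ 0 < e, (forall i, Lstar (Zs i)) &
          forall X', L X' -> (forall i, `|pair_E (Zs i) X' - pair_E (Zs i) X| < e) ->
            ~ A X'].

Definition w_lsc (L Lstar LG : set rv) (pi : rv -> rv) : Prop :=
  forall Y, LG Y -> wclosed L Lstar [set X | L X /\ ale (pi X) Y].

Definition cont_below (L : set rv) (pi : rv -> rv) : Prop :=
  forall (Xn : nat -> rv) X, (forall n, L (Xn n)) -> L X ->
    incr_to Xn X -> incr_to (fun n => pi (Xn n)) (pi X).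

End Defs.

(* Main.v *)
Require Import Defs.
From HB Require Import structures.
From mathcomp Require Import all_boot all_order all_algebra.
From mathcomp Require Import all_classical all_reals all_analysis.
From mathcomp.algebra_tactics Require Import ring lra.
Import Order.TTheory GRing.Theory Num.Theory.
Import numFieldNormedType.Exports.
Local Open Scope classical_set_scope.
Local Open Scope ring_scope.
Set Implicit Arguments. Unset Strict Implicit.
Section RealSeq.
Context (R : realType).
Implicit Types u : nat -> R.

Lemma incr_le_lim u l : (forall n, u n <= u n.+1) -> u @ \oo --> l ->
  forall n, u n <= l.
Proof.
move=> iu cu n.
have nd : nondecreasing_seq u by apply/nondecreasing_seqP.
have := nondecreasing_cvgn_le nd (cvgP _ cu) n.
by rewrite (cvg_lim _ cu).
Qed.

Lemma decr_le u : (forall n, u n.+1 <= u n) -> forall n m, (n <= m)%N -> u m <= u n.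
Proof.
move=> du n m /subnK <-; elim: (m - n)%N => [|k IH]; first by rewrite add0n.
by rewrite addSn; apply: le_trans (du _) IH.
Qed.

Lemma incr_le u : (forall n, u n <= u n.+1) -> forall n m, (n <= m)%N -> u n <= u m.
Proof.
move=> du n m /subnK <-; elim: (m - n)%N => [|k IH]; first by rewrite add0n.
by rewrite addSn; apply: le_trans IH (du _).
Qed.

Lemma lim_le_bound u l y : (forall n, u n <= y) -> u @ \oo --> l -> l <= y.
Proof.
move=> ub cu; apply: (ler_cvg_to cu (cvg_cst y)).
by apply: nearW.
Qed.
End RealSeq.

Section Main.
Context d (Omega : measurableType d) (R : realType) (P : probability Omega R).
Local Notation rv := (Omega -> R).

Lemma ale_refl (X : rv) : ale P X X.
Proof. by apply: aeW. Qed.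

Lemma ale_trans (X Y Z : rv) : ale P X Y -> ale P Y Z -> ale P X Z.
Proof. by apply: filterS2 => w; apply: le_trans. Qed.

Lemma sigma_bigcap (G : set (set Omega)) : sigma_algebra setT G ->
  forall A : nat -> set Omega, (forall n, G (A n)) -> G (\bigcap_n A n).
Proof.
move=> [_ GC GU] A GA.
have -> : \bigcap_n A n = setT `\` \bigcup_n (setT `\` A n).
  by rewrite setTD setC_bigcup; apply: eq_bigcapr => n _; rewrite setTD setCK.
by apply: (GC); apply: GU => n; apply: GC.
Qed.

Lemma near_oo_ex (p : nat -> Prop) : (\forall n \near \oo, p n) -> exists n, p n.
Proof. by case=> N _ HN; exists N; apply: HN => /=. Qed.


Lemma aeS (p q : Omega -> Prop) : (\forall w \ae P, p w) -> (forall w, p w -> q w) ->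
  \forall w \ae P, q w.
Proof. by move=> H pq; apply: filterS H. Qed.

Lemma aeS2 (p p' q : Omega -> Prop) : (\forall w \ae P, p w) -> (\forall w \ae P, p' w) ->
  (forall w, p w -> p' w -> q w) -> \forall w \ae P, q w.
Proof. by move=> H H' pq; apply: filterS2 H H'. Qed.

Lemma incr_ale (Xn : nat -> rv) X : incr_to P Xn X -> forall n, ale P (Xn n) X.
Proof. move=> H n; apply: filterS H => w [inc cv]; exact: (@incr_le_lim R (fun k => Xn k w) (X w) inc cv n). Qed.

Lemma incr_ale_step (Xn : nat -> rv) X : incr_to P Xn X -> forall n, ale P (Xn n) (Xn n.+1).
Proof. by move=> H n; apply: filterS H => w [inc cv]. Qed.

Lemma weak_incr (LF Lstar : set rv) :
  vlattice_ind measurable LF ->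
  (forall phi, oc_functional P LF phi <->
     exists2 Z, Lstar Z & forall X, LF X -> phi X = pair_E P Z X) ->
  forall (Xn : nat -> rv) X, (forall n, LF (Xn n)) -> LF X -> incr_to P Xn X ->
  forall Z, Lstar Z -> (fun n => pair_E P Z (Xn n)) @ \oo --> pair_E P Z X.
Proof.
move=> [L0 LD LZ LM LI] dual Xn X LXn LX H Z LsZ.
have [_ _ oc] : oc_functional P LF (pair_E P Z) by apply/dual; exists Z.
apply: oc => //.
exists (fun n w => X w + -1 * Xn n w); split; first by move=> n; apply: LD => //; apply: LZ.
split.
  apply: filterS H => w [inc cv]; split.
    by move=> n; rewrite !mulN1r lerD2l lerN2.
  rewrite -(subrr (X w)).
  under eq_fun do rewrite mulN1r.
  by apply: cvgB => //; apply: cvg_cst.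
move=> n; apply: filterS (incr_ale H n) => w /= le.
by rewrite mulN1r ger0_norm // subr_ge0.
Qed.


Lemma lsc_cb (G : set (set Omega)) (LF LG Lstar : set rv) (pi : rv -> rv) :
  sigma_algebra setT G ->
  (forall X, LG X -> Gmeas G X) -> vlattice_ind G LG ->
  vlattice_ind measurable LF ->
  (forall phi, oc_functional P LF phi <->
     exists2 Z, Lstar Z & forall X, LF X -> phi X = pair_E P Z X) ->
  (forall X, LF X -> LG (pi X)) ->
  (forall X Y, LF X -> LF Y -> ale P X Y -> ale P (pi X) (pi Y)) ->
  w_lsc P LF Lstar LG pi -> cont_below P LF pi.
Proof.
move=> sG GmLG [G0 GD GZ GM GI] vLF dual piLG mon lsc Xn X LXn LX H.
have aXn := incr_ale H.
have bS n : ale P (pi (Xn n)) (pi (Xn n.+1)).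
  exact: mon _ _ (LXn n) (LXn n.+1) (incr_ale_step H n).
have cS n : ale P (pi (Xn n)) (pi X) by exact: mon _ _ (LXn n) LX (aXn n).
have wk := weak_incr vLF dual LXn LX H.
pose D := fun w => pi X w + -1 * pi (Xn 0%N) w.
have LGD : LG D by apply: (GD); [apply: (piLG) | apply: (GZ); apply: (piLG)].
pose f (k n : nat) := fun w => (pi X w + -1 * pi (Xn n) w) + (- (k.+1%:R)^-1) * D w.
have LGf k n : LG (f k n).
  by apply: (GD); [apply: (GD); [apply: (piLG) | apply: (GZ); apply: (piLG)] | apply: (GZ)].
pose C k := \bigcap_n (f k n @^-1` `]0, +oo[).
have GC k : G (C k).
  apply: sigma_bigcap => // n; apply: (GmLG _ (LGf k n)); exact: measurable_itv.
pose Y k := fun w => pi X w + (- (k.+1%:R)^-1) * (\1_(C k) w * D w).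
have LGY k : LG (Y k) by apply: (GD); [apply: (piLG) | apply: (GZ); apply: (GI)].
have keyk k : ale P (pi X) (Y k).
  have bnd n : ale P (pi (Xn n)) (Y k).
    apply: filterS (cS n) => w /= le.
    rewrite /Y indicE; case: (boolP (w \in C k)) => [/set_mem|] wC.
      have := wC n I; rewrite /= in_itv /= andbT /f => pos.
      rewrite mul1r; move: pos; set t := (- _ * D w); lra.
    by rewrite mul0r mulr0 addr0.
  have cl := lsc _ (LGY k).
  suff : [set V | LF V /\ ale P (pi V) (Y k)] X by case.
  apply: contrapT => nA; have [N [Zs [e [e0 LZs Hn]]]] := cl X LX nA.
  have : \forall m \near \oo, forall i, `|pair_E P (Zs i) (Xn m) - pair_E P (Zs i) X| < e.
    apply: filter_forall => i; have /cvgrPdist_lt/(_ e e0) := wk _ (LZs i).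
    by apply: filterS => m; rewrite distrC.
  case/near_oo_ex => m Hm; apply: (Hn (Xn m) (LXn m) Hm); split => //.
have kk : \forall w \ae P, forall k, (forall n, 0 < f k n w) -> D w <= 0.
  apply: ae_foralln => k; apply: filterS (keyk k) => w /= le inC.
  have wC : w \in C k by apply: mem_set => n _; rewrite /= in_itv /= andbT; apply: inC.
  move: le; rewrite /Y indicE wC mul1r => le.
  have tp : 0 < (k.+1%:R : R)^-1 by rewrite invr_gt0 ltr0n.
  have : (k.+1%:R : R)^-1 * D w <= 0.
    move: le; rewrite mulNr; set t := (_ * D w); lra.
  by rewrite pmulr_rle0.
have HB : \forall w \ae P, forall n, pi (Xn n) w <= pi (Xn n.+1) w by apply: ae_foralln.
have HC : \forall w \ae P, forall n, pi (Xn n) w <= pi X w by apply: ae_foralln.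
rewrite /incr_to; apply: filterS (filterI HB (filterI HC kk)) => w [inc [cc kw]].
split; first exact: inc.
apply/cvgrPdist_lt => eps eps0.
suff [n0 Hn0] : exists n0, pi X w - pi (Xn n0) w < eps.
  near=> m; rewrite ger0_norm; last by rewrite subr_ge0; exact: cc.
  apply: (le_lt_trans _ Hn0).
  rewrite lerD2l lerN2; apply: (incr_le inc).
  by near: m; exact: nbhs_infty_ge.
apply: contrapT => /forallNP hn.
have hn' n : eps <= pi X w - pi (Xn n) w by rewrite leNgt; apply/negP/hn.
have Dge : eps <= D w by have := hn' 0%N; rewrite /D; lra.
have D0 : 0 <= D w / eps by rewrite divr_ge0 //; lra.
pose k := Num.bound (D w / eps).
have hk := archi_boundP D0.
have tp : 0 < (k.+1%:R : R) by rewrite ltr0n.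
have hk1 : D w / eps < k.+1%:R by apply: lt_le_trans hk _; rewrite ler_nat.
have hk2 : D w < k.+1%:R * eps by rewrite -ltr_pdivrMr.
have hk3 : (k.+1%:R)^-1 * D w < eps by rewrite ltr_pdivrMl // mulrC.
have : D w <= 0.
  apply: (kw k) => n; rewrite /f !mulNr mul1r; have := hn' n; move: hk3.
  set t := (_ * D w); lra.
lra.
Unshelve. all: by end_near.
Qed.


Lemma vl_lin (M : set (set Omega)) (L : set rv) : vlattice_ind M L ->
  forall (a b : R) X Y, L X -> L Y -> L (fun w => a * X w + b * Y w).
Proof. by move=> [L0 LD LZ LM LI] a b X Y LX LY; apply: LD; apply: LZ. Qed.

Lemma vl_sum (M : set (set Omega)) (L : set rv) : vlattice_ind M L ->
  forall (f : nat -> rv) (c : nat -> R) n m, (forall k, L (f k)) ->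
  L (fun w => \sum_(n <= k < m) c k * f k w).
Proof.
move=> vL f c n m Lf; have [L0 LD LZ LM LI] := vL.
elim: m => [|m IH].
  by under eq_fun do rewrite big_geq //.
case: (leqP n m) => nm.
  under eq_fun do rewrite big_nat_recr //=.
  by apply: LD => //; apply: LZ.
by under eq_fun do rewrite big_geq //.
Qed.

Lemma psum_nat0 (c : nat -> R) n m : (forall k, 0 <= c k) ->
  \sum_(n <= k < m) c k = 0 -> forall k, (n <= k < m)%N -> c k = 0.
Proof.
move=> c0; elim: m => [|m IH] s0 k; first by rewrite ltn0 andbF.
case: (leqP n m) => nm; last first.
  by move=> /andP[nk]; rewrite ltnS => km; have := leq_trans nk km; rewrite leqNgt nm.
move: s0; rewrite big_nat_recr //= => /eqP; rewrite paddr_eq0 ?c0 ?sumr_ge0 //.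
move=> /andP[/eqP s0 /eqP cm0] /andP[nk]; rewrite ltnS leq_eqVlt => /orP[/eqP ->//|km].
by apply: IH => //; rewrite nk.
Qed.

Lemma Gmeas_cst (G : set (set Omega)) : sigma_algebra setT G -> forall a : R, Gmeas G (fun _ => a).
Proof.
move=> [G0 GC _] a B mB.
have -> : (fun _ : Omega => a) @^-1` B = if a \in B then setT else set0 by exact: preimage_cst.
case: ifP => // _.
by have := GC set0 G0; rewrite setD0.
Qed.

Lemma conv_comb (G : set (set Omega)) (LF : set rv) (pi : rv -> rv) (Y : rv) :
  sigma_algebra setT G -> vlattice_ind measurable LF ->
  (forall X Y (Lam : Omega -> R), LF X -> LF Y -> Gmeas G Lam ->
     ale P (fun _ => 0) Lam -> ale P Lam (fun _ => 1) ->
     LF (fun w => Lam w * X w + (1 - Lam w) * Y w) ->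
     ale P (pi (fun w => Lam w * X w + (1 - Lam w) * Y w))
           (fun w => Num.max (pi X w) (pi Y w))) ->
  forall (f : nat -> rv), (forall k, LF (f k) /\ ale P (pi (f k)) Y) ->
  forall m n (c : nat -> R), (forall k, 0 <= c k) -> \sum_(n <= k < m) c k = 1 ->
  ale P (pi (fun w => \sum_(n <= k < m) c k * f k w)) Y.
Proof.
move=> sG vLF qco f Af; elim=> [|m IH] n c c0 s1.
  by move: s1; rewrite big_geq // => /eqP; rewrite eq_sym oner_eq0.
case: (leqP n m) => nm; last by move: s1; rewrite big_geq // => /eqP; rewrite eq_sym oner_eq0.
have LFf k := (Af k).1.
set s := \sum_(n <= k < m) c k.
have s0 : 0 <= s by apply: sumr_ge0.
have s1' : s + c m = 1 by rewrite -s1 big_nat_recr.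
have [sz|snz] := eqVneq s 0.
  have cm1 : c m = 1 by rewrite -s1' sz add0r.
  have -> : (fun w => \sum_(n <= k < m.+1) c k * f k w) = f m.
    apply/funext => w; rewrite big_nat_recr //= cm1 mul1r big_nat_cond big1 ?add0r //.
    move=> k /andP[kr _]; by rewrite (psum_nat0 c0 sz kr) mul0r.
  exact: (Af m).2.
have sp : 0 < s by rewrite lt_neqAle eq_sym snz s0.
pose g := fun w => \sum_(n <= k < m) (c k / s) * f k w.
have Ag : ale P (pi g) Y.
  apply: IH => [k|]; first by rewrite divr_ge0.
  by rewrite -mulr_suml -/s divff.
have LFg : LF g by apply: (vl_sum vLF).
have E : (fun w => \sum_(n <= k < m.+1) c k * f k w) =
         (fun w => (fun _ => s) w * g w + (1 - (fun _ => s) w) * f m w).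
  apply/funext => w /=; rewrite big_nat_recr //= /g mulr_sumr.
  congr (_ + _); last by rewrite -s1' addrC addKr.
  apply: eq_bigr => k _; rewrite mulrA mulrCA divff // mulr1 //.
rewrite E; apply: ale_trans (qco _ _ _ LFg (LFf m) (Gmeas_cst sG s) _ _ _) _.
- by apply: aeW => w.
- by apply: aeW => w /=; rewrite -s1' lerDl.
- by rewrite -E; apply: (vl_sum vLF).
apply: filterS2 Ag (Af m).2 => w h1 h2; by rewrite ge_max h1 h2.
Qed.


Lemma oc_inf (LF : set rv) : vlattice_ind measurable LF -> ocomplete P LF ->
  forall (Zn : nat -> rv) X, (forall n, LF (Zn n)) -> LF X -> oconv P LF Zn X ->
  exists V : nat -> rv, [/\ forall n, LF (V n), forall n, ale P (V n) (Zn n) &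
                           incr_to P V X].
Proof.
move=> vLF ocp Zn X LZ LX [W [LW [dW bW]]].
have [L0 LD LZZ LM LI] := vLF.
pose A n := fun U : rv => exists k, (n <= k)%N /\ U = (fun w => -1 * Zn k w).
have AL n : A n `<=` LF by move=> U [k [_ ->]]; apply: LZZ.
have dWk : \forall w \ae P, forall n k, (n <= k)%N -> W k w <= W n w.
  apply: filterS dW => w [dw _] n k nk; exact: (decr_le dw nk).
have AU n : forall U, A n U -> ale P U (fun w => W n w + -1 * X w).
  move=> U [k [nk ->]]; apply: filterS2 dWk (bW k) => w h1 h2.
  have := h1 n k nk; move: h2; rewrite !mulN1r => h2 h3.
  have := ler_norm (X w - Zn k w); lra.
have HS n : exists S, [/\ LF S, (forall U, A n U -> ale P U S) &
                   (forall U, LF U -> (forall U', A n U' -> ale P U' U) -> ale P S U)].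
  apply: ocp; first exact: AL.
    by exists (fun w => -1 * Zn n w), n.
  exists (fun w => W n w + -1 * X w); split; first by apply: LD => //; apply: LZZ.
  exact: AU.
have [S HS'] := choice HS.
exists (fun n w => -1 * S n w); split.
- by move=> n; apply: LZZ; case: (HS' n).
- move=> n; have [_ ub _] := HS' n.
  have := ub (fun w => -1 * Zn n w) (ex_intro _ n (conj (leqnn n) erefl)).
  by apply: filterS => w; rewrite !mulN1r lerNl.
have ha n : ale P (fun w => -1 * S n w) (Zn n).
  have [_ ub _] := HS' n.
  have := ub (fun w => -1 * Zn n w) (ex_intro _ n (conj (leqnn n) erefl)).
  by apply: filterS => w; rewrite !mulN1r lerNl.
have hb n : ale P (S n.+1) (S n).
  have [LSn ubn _] := HS' n; have [_ _ lst] := HS' n.+1.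
  apply: lst => // U [k [nk ->]]; apply: ubn; exists k; split => //.
  exact: ltnW.
have hc n : ale P (S n) (fun w => W n w + -1 * X w).
  have [_ _ lst] := HS' n; apply: lst; last exact: AU.
  by apply: LD => //; apply: LZZ.
have Ha := ae_foralln ha; have Hb := ae_foralln hb; have Hc := ae_foralln hc.
have Hd := ae_foralln bW.
rewrite /incr_to; apply: filterS (filterI dW (filterI Ha (filterI Hb (filterI Hc Hd)))).
move=> w [[_ W0] [a [b [c e]]]]; split.
  by move=> n; rewrite !mulN1r lerN2.
apply: (@squeeze_cvgr _ _ _ _ (fun n => X w - W n w) (fun n => X w + W n w)).
- apply: nearW => n; apply/andP; split.
    by have := c n; rewrite mulN1r; lra.
  have := a n; have := e n; have := ler_norm (Zn n w - X w); rewrite distrC /=; lra.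
- rewrite -[X in _ --> X](subr0 (X w)); apply: cvgB => //; exact: cvg_cst.
- rewrite -[X in _ --> X](addr0 (X w)); apply: cvgD => //; exact: cvg_cst.
Qed.


Lemma cb_lsc (G : set (set Omega)) (LF LG Lstar : set rv) (pi : rv -> rv) :
  sigma_algebra setT G -> vlattice_ind measurable LF ->
  C_property P LF Lstar -> ocomplete P LF ->
  (forall X Y, LF X -> LF Y -> ale P X Y -> ale P (pi X) (pi Y)) ->
  (forall X Y (Lam : Omega -> R), LF X -> LF Y -> Gmeas G Lam ->
     ale P (fun _ => 0) Lam -> ale P Lam (fun _ => 1) ->
     LF (fun w => Lam w * X w + (1 - Lam w) * Y w) ->
     ale P (pi (fun w => Lam w * X w + (1 - Lam w) * Y w))
           (fun w => Num.max (pi X w) (pi Y w))) ->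
  cont_below P LF pi -> w_lsc P LF Lstar LG pi.
Proof.
move=> sG vLF Cp ocp mon qco cb Y LGY X LX nA.
apply: contrapT => Hno.
pose A := [set V | LF V /\ ale P (pi V) Y].
have exA : exists X', LF X' /\ A X'.
  apply: contrapT => H'; apply: Hno.
  exists 0%N, (fun _ => X), 1; split => //; first by case.
  by move=> X' LX' _ AX'; apply: H'; exists X'.
have Hnb (p : (nat -> rv) * nat * R) : exists X', [/\ LF X', A X' &
    ((forall i, (i < p.1.2)%N -> Lstar (p.1.1 i)) -> 0 < p.2 ->
     forall i, (i < p.1.2)%N -> `|pair_E P (p.1.1 i) X' - pair_E P (p.1.1 i) X| < p.2)].
  case: (pselect ((forall i, (i < p.1.2)%N -> Lstar (p.1.1 i)) /\ 0 < p.2)) => [[HL he]|hno].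
    apply: contrapT => H'; apply: Hno.
    exists p.1.2, (fun i : 'I_p.1.2 => p.1.1 i), p.2; split => //.
      by move=> i; apply: HL; exact: ltn_ord.
    move=> X' LX' cl AX'; apply: H'; exists X'; split => // _ _ i iN.
    exact: (cl (Ordinal iN)).
  have [X' [LX' AX']] := exA; exists X'; split => // HL he; exfalso; exact: hno.
have [xf Hxf] := choice Hnb.
pose I := {p : (nat -> rv) * nat * R | (forall i, (i < p.1.2)%N -> Lstar (p.1.1 i)) /\ 0 < p.2}.
pose le (a b : I) := (forall i, (i < (sval a).1.2)%N ->
    exists j, (j < (sval b).1.2)%N /\ (sval b).1.1 j = (sval a).1.1 i) /\
    (sval b).2 <= (sval a).2.
pose x (a : I) := xf (sval a).
have dir : directed le.
  split.
  - constructor; exists ((fun _ => X), 0%N, 1); split => //.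
  - by move=> a; split => // i ia; exists i.
  - move=> a b c [ab1 ab2] [bc1 bc2]; split; last exact: le_trans bc2 ab2.
    move=> i ia; have [j [jb <-]] := ab1 i ia; exact: bc1.
  - move=> [[[Fa na] ea] [La ea0]] [[[Fb nb] eb] [Lb eb0]].
    have Lc : (forall i, (i < (na + nb))%N ->
        Lstar ((fun i => if (i < na)%N then Fa i else Fb (i - na)%N) i)) /\
        0 < Num.min ea eb.
      split; last by rewrite lt_min ea0 eb0.
      move=> i inab /=; case: ifP => ina; first exact: La.
      by apply: Lb; rewrite ltn_subLR // leqNgt ina.
    exists (exist _ (_, _, _) Lc); split; split => /=.
    + by move=> i ia; exists i; rewrite ia ltn_addr.
    + by rewrite ge_min lexx.
    + move=> i ib; exists (na + i)%N; rewrite ltn_add2l ib; split => //.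
      by rewrite ltnNge leq_addr /= addKn.
    + by rewrite ge_min lexx orbT.
have Lx a : LF (x a) by have [] := Hxf (sval a).
have Ax a : A (x a) by have [] := Hxf (sval a).
have wc : wconv_net P Lstar le x X.
  move=> Z LsZ e e0.
  have p0 : (forall i, (i < 1)%N -> Lstar Z) /\ 0 < e by split => // i _.
  exists (exist _ ((fun _ : nat => Z), 1%N, e) p0 : I) => a [H1 H2].
  have [j [ja /= Fj]] := H1 0%N isT.
  have [_ _ cl] := Hxf (sval a).
  apply: lt_le_trans H2; rewrite -Fj; apply: cl => //; by case: (svalP a).
have [al [Zn [LZn [cZ oZ]]]] := Cp I le x X dir Lx LX wc.
have AZ n : ale P (pi (Zn n)) Y.
  have [m [c [c0 s1 ->]]] := cZ n.
  apply: (conv_comb sG vLF qco) => // k; exact: Ax.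
have [V [LV VZ iV]] := oc_inf vLF ocp LZn LX oZ.
have cbV := cb V X LV LX iV.
have piV n : ale P (pi (V n)) Y by apply: ale_trans (mon _ _ (LV n) (LZn n) (VZ n)) (AZ n).
apply: nA; split => //.
apply: filterS (filterI cbV (ae_foralln piV)) => w [[_ cv] bnd].
exact: (lim_le_bound bnd cv).
Qed.

End Main.

Unset Implicit Arguments. Set Strict Implicit.

Theorem proposition13 (d : measure_display) (Omega : measurableType d)
  (R : realType) (P : probability Omega R)
  (G : set (set Omega)) (LF LG Lstar : set (Omega -> R)) (pi : (Omega -> R) -> (Omega -> R)) :
  (* G is a sub-sigma-algebra of F *)
  sigma_algebra setT G -> G `<=` measurable ->
  (* standing assumptions on L_F, L_G *)
  (forall X, LF X -> measurable_fun setT X) -> vlattice_ind measurable LF ->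
  (forall X, LG X -> Gmeas G X) -> vlattice_ind G LG ->
  (* standing assumptions on the dual L_F^* (represented by densities Z) *)
  (forall Z, Lstar Z -> measurable_fun setT Z /\ P.-integrable setT (EFin \o Z)) ->
  (forall Z X, Lstar Z -> LF X -> P.-integrable setT (EFin \o (fun w => Z w * X w))) ->
  vlattice_ind measurable Lstar ->
  (forall phi : (Omega -> R) -> R, oc_functional P LF phi <->
     exists2 Z, Lstar Z & forall X, LF X -> phi X = pair_E P Z X) ->
  (* hypotheses of the proposition *)
  C_property P LF Lstar -> ocomplete P LF ->
  (forall X, LF X -> LG (pi X)) ->
  (* (MON) *)
  (forall X Y, LF X -> LF Y -> ale P X Y -> ale P (pi X) (pi Y)) ->
  (* (QCO) *)
  (forall X Y (Lam : Omega -> R), LF X -> LF Y -> Gmeas G Lam ->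
     ale P (fun _ => 0) Lam -> ale P Lam (fun _ => 1) ->
     LF (fun w => Lam w * X w + (1 - Lam w) * Y w) ->
     ale P (pi (fun w => Lam w * X w + (1 - Lam w) * Y w))
           (fun w => Num.max (pi X w) (pi Y w))) ->
  (w_lsc P LF Lstar LG pi <-> cont_below P LF pi).
Proof.
move=> sG GF mF vLF GmLG vLG _ _ _ dual Cp ocp piLG mon qco; split.
- by move=> lsc; apply: (lsc_cb sG GmLG vLG vLF dual piLG mon lsc).
- by move=> cb; apply: (cb_lsc sG vLF Cp ocp mon qco cb).
Qed.
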